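(* Let $\mathcal{V},\bar{\mathcal{V}}$ be disjoint finite sets with $|\mathcal{V}|=N$, $|\bar{\mathcal{V}}|=M$, and let $G:2^{\mathcal{V}\cup\bar{\mathcal{V}}}\to\mathbb{R}$ be a submodular, nonnegative set function with $G(\emptyset)=0$ and $G(\mathcal{V}\cup\bar{\mathcal{V}})=0$, with Lovász extension $g(\mathbf{x},\bar{\mathbf{x}})$. Define $F:2^{\mathcal{V}}\to\mathbb{R}$ by $F(\mathcal{S})=\min_{\mathcal{T}\subseteq\bar{\mathcal{V}}}G(\mathcal{S}\cup\mathcal{T})-\min_{\mathcal{T}\subseteq\bar{\mathcal{V}}}G(\mathcal{T})$. Then the Lovász extension $f$ of $F$ satisfies $f(\mathbf{x})=\min_{\bar{\mathbf{x}}\in\mathbb{R}^M}g(\mathbf{x},\bar{\mathbf{x}})$ for all $\mathbf{x}\in\mathbb{R}^N$.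
   Context: Lovász extension: for a set function $F:2^{[n]}\to\mathbb{R}$ with $F(\emptyset)=0$, and $\mathbf{x}\in\mathbb{R}^n$ with entries sorted as $x_{i_1}\ge\cdots\ge x_{i_n}$, $f(\mathbf{x})=\sum_{j=1}^{n-1}F(\{i_1,\dots,i_j\})(x_{i_j}-x_{i_{j+1}})+F([n])x_{i_n}$. In $g(\mathbf{x},\bar{\mathbf{x}})$, $\mathbf{x}\in\mathbb{R}^N$ is indexed by $\mathcal{V}$ and $\bar{\mathbf{x}}\in\mathbb{R}^M$ by $\bar{\mathcal{V}}$. Submodularity: $F(\mathcal{S}_1)+F(\mathcal{S}_2)\ge F(\mathcal{S}_1\cup\mathcal{S}_2)+F(\mathcal{S}_1\cap\mathcal{S}_2)$. *)

(* Defs.v *)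
From mathcomp Require Import all_boot all_order all_algebra.
Set Implicit Arguments. Unset Strict Implicit. Unset Printing Implicit Defensive.
Import Order.TTheory GRing.Theory Num.Theory.
Local Open Scope ring_scope.

(* Lovász extension of F : 2^T -> R at x : T -> R.
   s = enumeration of T sorted so that x_{s_0} >= x_{s_1} >= ... >= x_{s_{n-1}};
   f(x) = sum_{j<n} F({s_0,...,s_j}) (x_{s_j} - x_{s_{j+1}}) with x_{s_n} := 0,
   which is exactly sum_{j=1}^{n-1} F(S_j)(x_{i_j}-x_{i_{j+1}}) + F([n]) x_{i_n}. *)
Definition lovasz {R : realDomainType} {T : finType} (F : {set T} -> R)
    (x : T -> R) : R :=
  let s := sort (fun i j => x j <= x i) (enum T) in
  let v := map x s in
  \sum_(j < size s) F [set i in take j.+1 s] * (nth 0 v j - nth 0 v j.+1).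

Definition submodular {R : realDomainType} {T : finType} (F : {set T} -> R) :=
  forall A B : {set T}, F (A :|: B) + F (A :&: B) <= F A + F B.

Definition joinset {V W : finType} (S : {set V}) (T : {set W}) : {set V + W} :=
  (@inl V W @: S) :|: (@inr V W @: T).

Definition joinvec {R : Type} {V W : finType} (x : V -> R) (xb : W -> R)
    : V + W -> R :=
  fun u => match u with inl v => x v | inr w => xb w end.

Definition minT {R : realDomainType} {V W : finType}
    (G : {set V + W} -> R) (S : {set V}) : R :=
  \big[Num.min/G (joinset S set0)]_(T : {set W}) G (joinset S T).

Definition partial_min {R : realDomainType} {V W : finType}
    (G : {set V + W} -> R) (S : {set V}) : R :=
  minT G S - minT G set0.

(* Main.v *)
Require Import Defs.
From mathcomp Require Import all_boot all_order all_algebra.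
From mathcomp Require Import zify ring lra.
Set Implicit Arguments. Unset Strict Implicit. Unset Printing Implicit Defensive.
Import Order.TTheory GRing.Theory Num.Theory.
Local Open Scope ring_scope.

Definition Lev {R : realDomainType} {T : finType} (u : T -> R) (t : R) : {set T} := [set i | t <= u i].

Definition layered {R : realDomainType} {T : finType} (H : {set T} -> R) (u : T -> R) (c : seq R) :=
  \sum_(j < size c) H (Lev u (nth 0 c j)) * (nth 0 c j - nth 0 c j.+1).

Definition ge_rel {R : realDomainType} : rel R := fun a b => b <= a.

Lemma lovasz_layered {R : realDomainType} {T : finType} (H : {set T} -> R) (u : T -> R) :
  lovasz H u = layered H u (map u (sort (fun i j => u j <= u i) (enum T))).
Proof.
rewrite /lovasz /layered size_map.
set s := sort _ _.
have sc : sorted ge_rel (map u s).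
  rewrite sorted_map; apply: sort_sorted => i j; exact: le_total.
have ins : forall i, i \in s by move=> i; rewrite mem_sort mem_enum.
have mono : forall a b, (a < size s)%N -> (b < size s)%N -> (a <= b)%N ->
    nth 0 (map u s) b <= nth 0 (map u s) a.
  move=> a b ha hb hab.
  have := @sorted_leq_nth _ ge_rel _ _ 0 _ sc a b.
  rewrite !inE size_map; apply => //.
    by move=> x y z /= h1 h2; apply: le_trans h2 h1.
  by move=> x; rewrite /ge_rel.
clearbody s. apply: eq_bigr => j _.
have [->|hne] := eqVneq (nth 0 (map u s) j) (nth 0 (map u s) j.+1).
  by rewrite subrr !mulr0.
congr (H _ * _); apply/setP => i; rewrite !inE.
have hj : (j < size s)%N by [].
apply/idP/idP.
  move/nthP => /(_ i) [k]; rewrite size_take.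
  move=> hk <-.
  have hk' : (k <= j)%N by move: hk; case: ifP => h1 h2; lia.
  have hks : (k < size s)%N by lia.
  rewrite nth_take; last by lia.
  have := mono _ _ hks hj hk'.
  by rewrite !(nth_map i).
move=> hi; apply/negPn/negP => hn.
have : i \in drop j.+1 s.
  have := ins i; rewrite -{1}(cat_take_drop j.+1 s) mem_cat (negbTE hn); exact.
move/nthP => /(_ i) [k]; rewrite size_drop => hk; rewrite nth_drop => hik.
move: hk; set n := size s; set jj := nat_of_ord j; move=> hk. have hj1 : (jj.+1 < n)%N by lia.
have h1 : (j.+1 + k < size s)%N by lia.
have := mono _ _ hj1 h1 (leq_addr _ _).
have := mono _ _ hj hj1 (leqnSn _).
rewrite (nth_map i) // (nth_map i) // (nth_map i) // hik => ha hb.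
move: hne hi; rewrite (nth_map i) // (nth_map i) // => hne hi.
apply/(negP hne)/eqP; apply/le_anti; rewrite ha andbT.
exact: le_trans hi hb.
Qed.

Definition prevH {R : realDomainType} {T : finType} (H : {set T} -> R) (u : T -> R) (c : seq R) :=
  if (size c == 0)%N then 0 else H (Lev u (last 0 c)).

Lemma layered_rcons {R : realDomainType} {T : finType} (H : {set T} -> R) (u : T -> R) c b :
  layered H u (rcons c b) = layered H u c + b * (H (Lev u b) - prevH H u c).
Proof.
rewrite /prevH; case/lastP: c => [|c l].
  by rewrite /layered /= big_ord1 big_ord0 /=; ring.
rewrite /layered !size_rcons /= last_rcons !big_ord_recr /=.
have E : forall (d : seq R) x n, nth 0 (rcons d x) n =
   if (n < size d)%N then nth 0 d n else if n == size d then x else 0.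
  by move=> d x n; rewrite nth_rcons.
have e1 : (rcons (rcons c l) b)`_(size c) = l.
  by rewrite !E size_rcons ltnSn ltnn eqxx.
have e2 : (rcons (rcons c l) b)`_(size c).+1 = b.
  by rewrite !E size_rcons ltnn eqxx.
have e3 : (rcons (rcons c l) b)`_(size c).+2 = 0.
  rewrite !E size_rcons ifF; last by lia.
  by rewrite ifF //; apply/eqP; lia.
have e4 : (rcons c l)`_(size c) = l by rewrite !E ltnn eqxx.
have e5 : (rcons c l)`_(size c).+1 = 0.
  by rewrite !E ifF; [rewrite ifF //; apply/eqP; lia| lia].
rewrite e1 e2 e3 e4 e5.
have -> : \sum_(i < size c) H (Lev u (rcons (rcons c l) b)`_i) *
     ((rcons (rcons c l) b)`_i - (rcons (rcons c l) b)`_i.+1) =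
   \sum_(i < size c) H (Lev u (rcons c l)`_i) *
     ((rcons c l)`_i - (rcons c l)`_i.+1).
  apply: eq_bigr => j _; rewrite !(E (rcons c l)) !size_rcons.
  move: (ltn_ord j); set jj := nat_of_ord j; set n := size c => hj.
  rewrite ifT; last lia. rewrite ifT; last lia. done.
ring.
Qed.

Definition Phi {R : realDomainType} {T : finType} (H : {set T} -> R) (u : T -> R) (s : seq R) :=
  \sum_(t <- s) t * (H (Lev u t) - H [set i | t < u i]).

Lemma ge_trans {R : realDomainType} : transitive (@ge_rel R).
Proof. by move=> x y z /= h1 h2; apply: le_trans h2 h1. Qed.

Lemma sorted_rcons_min {R : realDomainType} (c : seq R) b : sorted ge_rel (rcons c b) -> forall y, y \in c -> b <= y.
Proof.
elim: c => [|a c IH] //= h y.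
move: h; rewrite (path_sortedE ge_trans) => /andP[/allP ha hs].
rewrite inE => /orP[/eqP ->|hy]; last exact: IH.
by apply: ha; rewrite mem_rcons mem_head.
Qed.

Lemma sorted_rcons_init {R : realDomainType} (c : seq R) b : sorted ge_rel (rcons c b) -> sorted ge_rel c.
Proof. by rewrite -cats1 => /cat_sorted2[]. Qed.

Lemma layered_Phi {R : realDomainType} {T : finType} (H : {set T} -> R) (u : T -> R) c : H set0 = 0 -> sorted ge_rel c ->
  (forall i b, b \in c -> b <= u i -> u i \in c) ->
  layered H u c = Phi H u (undup c).
Proof.
move=> H0; elim/last_ind: c => [|c b IH] sc cov.
  by rewrite /layered /Phi big_ord0 big_nil.
have hmin := sorted_rcons_min sc.
have covc : forall i b', b' \in c -> b' <= u i -> u i \in c.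
  move=> i b' hb' hle.
  have := cov i b'; rewrite mem_rcons inE hb' orbT => /(_ isT hle).
  rewrite mem_rcons inE => /orP[/eqP e|//].
  have hbb : b' = b by apply/le_anti; rewrite hmin // andbT -e.
  by rewrite e -hbb.
rewrite layered_rcons IH //; last exact: sorted_rcons_init sc.
rewrite /prevH.
case: (boolP (b \in c)) => hb.
  have -> : Phi H u (undup (rcons c b)) = Phi H u (undup c).
    apply: perm_big; apply: uniq_perm; rewrite ?undup_uniq // => y.
    by rewrite !mem_undup mem_rcons inE; case: eqP => // ->.
  move: hb hmin sc; case/lastP: c {IH covc cov} => [//|c l] hb hmin sc.
  rewrite size_rcons last_rcons /=.
  have -> : b = l; last by rewrite subrr mulr0 addr0.
  apply/le_anti; rewrite hmin ?mem_rcons ?mem_head // /=.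
  move: hb; rewrite mem_rcons inE => /orP[/eqP -> //|hb].
  exact: (sorted_rcons_min (sorted_rcons_init sc)).
have -> : Phi H u (undup (rcons c b)) = Phi H u (rcons (undup c) b).
  apply: perm_big; apply: uniq_perm; rewrite ?undup_uniq ?rcons_uniq ?mem_undup ?hb ?undup_uniq // => y.
  by rewrite mem_undup !mem_rcons !inE mem_undup.
rewrite /Phi big_rcons /=; congr (_ + b * (_ - _)).
move: hb hmin covc sc cov; case/lastP: c {IH} => [|c l] hb hmin covc sc cov.
  rewrite /= -H0; congr H; apply/setP => i; rewrite !inE.
  apply/esym/negbTE/negP => hl; have := cov i b (mem_head _ _) (ltW hl).
  by rewrite inE => /eqP e; move: hl; rewrite e ltxx.
rewrite size_rcons last_rcons /=; congr H; apply/setP => i; rewrite !inE.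
have hlc : l \in rcons c l by rewrite mem_rcons mem_head.
have hbl : b < l.
  rewrite lt_neqAle hmin // andbT; apply/eqP => e; move: hb; by rewrite e hlc.
apply/idP/idP => h; first exact: lt_le_trans hbl h.
  have := cov i b; rewrite mem_rcons mem_head => /(_ isT (ltW h)).
  rewrite mem_rcons inE => /orP[/eqP e|hi]; first by move: h; rewrite e ltxx.
  move: hi; rewrite mem_rcons inE => /orP[/eqP -> //|hi].
  exact: (sorted_rcons_min (sorted_rcons_init sc)).
Qed.

Lemma Phi_inv {R : realDomainType} {T : finType} (H : {set T} -> R) (u : T -> R) s1 s2 : uniq s1 -> uniq s2 ->
  (forall i, u i \in s1) -> (forall i, u i \in s2) -> Phi H u s1 = Phi H u s2.
Proof.
move=> u1 u2 c1 c2.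
have key : forall s, Phi H u s =
    \sum_(t <- s | t \in codom u) t * (H (Lev u t) - H [set i | t < u i]).
  move=> s; rewrite big_mkcond; apply: eq_bigr => t _.
  case: ifP => // /negbT ht.
  suff -> : Lev u t = [set i | t < u i] by rewrite subrr mulr0.
  apply/setP => i; rewrite !inE le_eqVlt.
  have -> : (t == u i) = false.
    by apply/negbTE/eqP => e; move: ht; rewrite e codom_f.
  by [].
rewrite (key s1) (key s2) -(big_filter s1) -(big_filter s2); apply: perm_big; apply: uniq_perm; rewrite ?filter_uniq //.
move=> t; rewrite !mem_filter; case: (boolP (t \in codom u)) => //= /codomP [i ->].
by rewrite c1 c2.
Qed.

Lemma mem_joinl {V W : finType} (S : {set V}) (T : {set W}) v :
  (inl v \in joinset S T) = (v \in S).
Proof.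
rewrite /joinset in_setU mem_imset; last by move=> a b [].
by case: (v \in S) => //=; apply/negbTE/imsetP => -[w _].
Qed.

Lemma mem_joinr {V W : finType} (S : {set V}) (T : {set W}) w :
  (inr w \in joinset S T) = (w \in T).
Proof.
rewrite /joinset in_setU mem_imset; last by move=> a b [].
by have -> : (@inr V W w \in inl @: S) = false by apply/negbTE/imsetP => -[v _].
Qed.

Lemma joinset_Lev {R : realDomainType} {V W : finType} (x : V -> R) (xb : W -> R) t :
  Lev (joinvec x xb) t = joinset (Lev x t) (Lev xb t).
Proof. by apply/setP => -[v|w]; rewrite ?mem_joinl ?mem_joinr !inE. Qed.

Lemma joinsetU {V W : finType} (S S' : {set V}) (T T' : {set W}) :
  joinset S T :|: joinset S' T' = joinset (S :|: S') (T :|: T').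
Proof. by apply/setP => -[v|w]; rewrite in_setU ?mem_joinl ?mem_joinr in_setU. Qed.

Lemma joinsetI {V W : finType} (S S' : {set V}) (T T' : {set W}) :
  joinset S T :&: joinset S' T' = joinset (S :&: S') (T :&: T').
Proof. by apply/setP => -[v|w]; rewrite in_setI ?mem_joinl ?mem_joinr in_setI. Qed.

Lemma joinsetTT {V W : finType} : joinset [set: V] [set: W] = setT.
Proof. by apply/setP => -[v|w]; rewrite ?mem_joinl ?mem_joinr !inE. Qed.

Lemma joinset00 {V W : finType} : joinset (set0 : {set V}) (set0 : {set W}) = set0.
Proof. by apply/setP => -[v|w]; rewrite ?mem_joinl ?mem_joinr !inE. Qed.

Lemma minT_le {R : realDomainType} {V W : finType} (G : {set V + W} -> R) S T :
  minT G S <= G (joinset S T).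
Proof. by rewrite /minT (bigD1 T) //= ge_min lexx. Qed.

Lemma minT_ex {R : realDomainType} {V W : finType} (G : {set V + W} -> R) S :
  exists T, minT G S = G (joinset S T).
Proof.
rewrite /minT; apply: (big_ind (fun y => exists T, y = G (joinset S T))).
- by exists set0.
- move=> a b [Ta ->] [Tb ->]; case: (leP (G (joinset S Ta)) (G (joinset S Tb))) => h.
    by exists Ta.
  by exists Tb.
- by move=> T _; exists T.
Qed.

Lemma minT_ge0 {R : realDomainType} {V W : finType} (G : {set V + W} -> R) S :
  (forall A, 0 <= G A) -> 0 <= minT G S.
Proof.
move=> Gn; rewrite /minT; apply: (big_ind (fun y => 0 <= y)) => //.
by move=> a b ha hb; rewrite le_min ha hb.
Qed.

Definition mzr {R : realDomainType} {V W : finType} (G : {set V + W} -> R)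
  (S : {set V}) (T : {set W}) : bool := G (joinset S T) == minT G S.

Definition T0 {R : realDomainType} {V W : finType} (G : {set V + W} -> R) S :=
  odflt set0 [pick T | mzr G S T].

Definition Tc {R : realDomainType} {V W : finType} (G : {set V + W} -> R) S :=
  if S == setT then setT else [arg min_(T < T0 G S | mzr G S T) #|T|].

Lemma mzr_T0 {R : realDomainType} {V W : finType} (G : {set V + W} -> R) S :
  mzr G S (T0 G S).
Proof.
rewrite /T0; case: pickP => [T //|hn] /=.
have [T hT] := minT_ex G S.
by move: (hn T); rewrite /mzr hT eqxx.
Qed.

Lemma minT_T {R : realDomainType} {V W : finType} (G : {set V + W} -> R) :
  (forall A, 0 <= G A) -> G setT = 0 -> minT G setT = 0.
Proof.
move=> Gn GT; apply/le_anti; rewrite minT_ge0 // andbT.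
by have := minT_le G setT setT; rewrite joinsetTT GT.
Qed.

Lemma minT_0 {R : realDomainType} {V W : finType} (G : {set V + W} -> R) :
  (forall A, 0 <= G A) -> G set0 = 0 -> minT G set0 = 0.
Proof.
move=> Gn G0; apply/le_anti; rewrite minT_ge0 // andbT.
by have := minT_le G set0 set0; rewrite joinset00 G0.
Qed.

Lemma Tc_mzr {R : realDomainType} {V W : finType} (G : {set V + W} -> R) S :
  (forall A, 0 <= G A) -> G setT = 0 -> mzr G S (Tc G S).
Proof.
move=> Gn GT; rewrite /Tc; case: ifP => [/eqP ->|_].
  by rewrite /mzr joinsetTT GT minT_T.
by case: arg_minnP => //; exact: mzr_T0.
Qed.

Lemma Tc_min {R : realDomainType} {V W : finType} (G : {set V + W} -> R) S T :
  S != setT -> mzr G S T -> (#|Tc G S| <= #|T|)%N.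
Proof.
move=> /negbTE hS hT; rewrite /Tc hS.
by case: arg_minnP => [|T' _ h]; [exact: mzr_T0 | exact: h].
Qed.

Lemma Tc_mono {R : realFieldType} {V W : finType} (G : {set V + W} -> R) (S S' : {set V}) :
  submodular G -> (forall A, 0 <= G A) -> G setT = 0 ->
  S \subset S' -> Tc G S \subset Tc G S'.
Proof.
move=> Gs Gn GT sS.
case: (boolP (S' == setT)) => hS'.
  by rewrite /Tc hS' subsetT.
have hS : S != setT.
  apply: contraNneq hS' => e; rewrite eqEsubset subsetT /=; by rewrite -e.
set A := Tc G S; set B := Tc G S'.
have mA : G (joinset S A) = minT G S by apply/eqP; apply: Tc_mzr.
have mB : G (joinset S' B) = minT G S' by apply/eqP; apply: Tc_mzr.
have hsub := Gs (joinset S A) (joinset S' B).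
rewrite joinsetU joinsetI (setUidPr sS) (setIidPl sS) in hsub.
have l1 := minT_le G S' (A :|: B).
have l2 := minT_le G S (A :&: B).
have mI : mzr G S (A :&: B).
  rewrite /mzr eq_le l2 andbT; lra.
have hc := Tc_min hS mI.
have : A :&: B == A by rewrite eqEcard subsetIl hc.
by move/eqP/setIidPl.
Qed.

Definition dmin {R : realDomainType} {V : finType} (x : V -> R) :=
  \big[Num.min/0]_(v : V) x v.

Definition xbc {R : realDomainType} {V W : finType} (G : {set V + W} -> R)
   (x : V -> R) (w : W) : R :=
  \big[Num.max/dmin x]_(v | w \in Tc G (Lev x (x v))) x v.

Lemma dmin_le {R : realDomainType} {V : finType} (x : V -> R) v : dmin x <= x v.
Proof. by rewrite /dmin (bigD1 v) //= ge_min lexx. Qed.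

Lemma xbc_ge_d {R : realDomainType} {V W : finType} (G : {set V + W} -> R) x w :
  dmin x <= xbc G x w.
Proof.
rewrite /xbc; apply: (big_ind (fun y => dmin x <= y)) => //.
- by move=> a b ha hb; rewrite le_max ha.
- by move=> v _; exact: dmin_le.
Qed.

Lemma xbc_ge {R : realDomainType} {V W : finType} (G : {set V + W} -> R) x w v :
  w \in Tc G (Lev x (x v)) -> x v <= xbc G x w.
Proof. by move=> h; rewrite /xbc (bigD1 v) //= le_max lexx. Qed.

Lemma xbc_cases {R : realDomainType} {V W : finType} (G : {set V + W} -> R) x w :
  xbc G x w = dmin x \/ exists v, w \in Tc G (Lev x (x v)) /\ xbc G x w = x v.
Proof.
rewrite /xbc; apply: (big_ind (fun y => y = dmin x \/ exists v, w \in Tc G (Lev x (x v)) /\ y = x v)).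
- by left.
- move=> a b ha hb; case: (leP a b) => _; [exact: hb | exact: ha].
- by move=> v hv; right; exists v.
Qed.

Lemma thresh {R : realFieldType} {V W : finType} (G : {set V + W} -> R) x t :
  submodular G -> (forall A, 0 <= G A) -> G setT = 0 ->
  (t = dmin x \/ exists v, t = x v) ->
  Lev (xbc G x) t = Tc G (Lev x t).
Proof.
move=> Gs Gn GT ht.
have LT : forall t', t' <= dmin x -> Lev x t' = setT.
  move=> t' h; apply/setP => v; rewrite !inE; exact: le_trans h (dmin_le _ _).
case: ht => [->|[v0 ->]].
  rewrite LT // /Tc eqxx; apply/setP => w; rewrite !inE; exact: xbc_ge_d.
apply/setP => w; rewrite inE; apply/idP/idP; last exact: xbc_ge.
move=> h; case: (xbc_cases G x w) => [e|[v [hv e]]].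
  by rewrite LT /Tc ?eqxx ?inE // -e.
have : Lev x (x v) \subset Lev x (x v0).
  apply/subsetP => i; rewrite !inE; apply: le_trans; by rewrite -e.
by move/(Tc_mono Gs Gn GT)/subsetP; apply.
Qed.

Definition vals {R : realDomainType} {T : finType} (u : T -> R) :=
  map u (sort (fun i j => u j <= u i) (enum T)).

Lemma sorted_vals {R : realDomainType} {T : finType} (u : T -> R) :
  sorted ge_rel (vals u).
Proof. rewrite /vals sorted_map; apply: sort_sorted => i j; exact: le_total. Qed.

Lemma mem_vals {R : realDomainType} {T : finType} (u : T -> R) i : u i \in vals u.
Proof. by rewrite /vals map_f // mem_sort mem_enum. Qed.

Lemma vals_mem {R : realDomainType} {T : finType} (u : T -> R) t :
  t \in vals u -> exists i, t = u i.
Proof. by case/mapP => i _ ->; exists i. Qed.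

Lemma le_nth_sorted {R : realDomainType} (c : seq R) j k :
  sorted ge_rel c -> (j <= k)%N -> (k < size c)%N -> nth 0 c k <= nth 0 c j.
Proof.
move=> sc hjk hk.
have := @sorted_leq_nth _ ge_rel ge_trans _ 0 _ sc j k.
apply.
- by move=> y; rewrite /ge_rel.
- by rewrite inE; lia.
- by rewrite inE.
- done.
Qed.

Theorem lemma4 (R : realFieldType) (V W : finType)
    (G : {set V + W} -> R)
    (Gsub : submodular G)
    (Gnonneg : forall A, 0 <= G A)
    (G0 : G set0 = 0)
    (GT : G setT = 0)
    (x : V -> R) :
  (exists xb : W -> R,
      lovasz G (joinvec x xb) = lovasz (partial_min G) x) /\
  (forall xb : W -> R, lovasz (partial_min G) x <= lovasz G (joinvec x xb)).
Proof.
set Fm := partial_min G.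
have hFm : forall S, Fm S = minT G S by move=> S; rewrite /Fm /partial_min minT_0 // subr0.
have Fm0 : Fm set0 = 0 by rewrite /Fm /partial_min subrr.
have xin : forall (xb : W -> R) v, x v \in vals (joinvec x xb).
  by move=> xb v; have := mem_vals (joinvec x xb) (inl v); exact.
have key : forall xb : W -> R, lovasz Fm x = layered Fm x (vals (joinvec x xb)).
  move=> xb; rewrite lovasz_layered layered_Phi //; last first.
  - by move=> i b _ _; exact: mem_vals.
  - exact: sorted_vals.
  rewrite (@Phi_inv _ _ Fm x _ (undup (vals (joinvec x xb))) (undup_uniq _) (undup_uniq _)); last first.
  - by move=> v; rewrite mem_undup.
  - by move=> v; rewrite mem_undup; exact: mem_vals.
  rewrite -layered_Phi //; first exact: sorted_vals.
split.
  exists (xbc G x); rewrite (key (xbc G x)) lovasz_layered /layered; apply: eq_bigr => j _.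
  congr (_ * _).
  set c := vals _.
  have : nth 0 c j \in c by apply: mem_nth.
  move/vals_mem => [[v|w] /= ->].
    rewrite joinset_Lev thresh //; last by right; exists v.
    by rewrite hFm; apply/eqP; apply: Tc_mzr.
  rewrite joinset_Lev thresh //; first by rewrite hFm; apply/eqP; apply: Tc_mzr.
  case: (xbc_cases G x w) => [->|[v [_ ->]]]; [by left | by right; exists v].
move=> xb; rewrite (key xb) lovasz_layered /layered; apply: ler_sum => j _.
set c := vals _.
have sc : sorted ge_rel c by apply: sorted_vals.
case: (ltnP j.+1 (size c)) => hj.
  apply: ler_wpM2r; first by rewrite subr_ge0; apply: le_nth_sorted.
  by rewrite hFm joinset_Lev; apply: minT_le.
have hmin : forall i, nth 0 c j <= joinvec x xb i.
  move=> i; have := mem_vals (joinvec x xb) i; rewrite -/c => /nthP => /(_ 0) [k hk <-].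
  apply: le_nth_sorted => //; move: (ltn_ord j) hk hj.
  set jj := nat_of_ord j; set n := size c => *; lia.
have e1 : Lev (joinvec x xb) (nth 0 c j) = setT by apply/setP => i; rewrite !inE hmin.
have e2 : Lev x (nth 0 c j) = setT by apply/setP => v; rewrite !inE (hmin (inl v)).
by rewrite e1 e2 GT hFm minT_T.
Qed.
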